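(* Let $\Omega\subset\mathbb H^n$ be an open, horizontally bounded and (Euclidean) convex set. If $u:\overline\Omega\to\mathbb R$ is an $H$-convex function with $u=0$ on $\partial\Omega$, and $B_H(\xi_0,3R)\subset\Omega$ for some $\xi_0\in\Omega$ and $R>0$, then $$\frac1{31}\,u(\xi)\ge u(\zeta)\ge 31\,u(\xi)\qquad\forall\xi,\zeta\in B_H(\xi_0,R).$$
   Context: $\mathbb H^n=\mathbb C^n\times\mathbb R\cong\mathbb R^{2n+1}$ with real coordinates $(x,y,t)$, $z=x+iy$, group law $(z,t)\circ(z',t')=(z+z',t+t'+2\,\mathrm{Im}\langle z,z'\rangle)$, $\langle z,z'\rangle=\sum_j z_j\overline{z'_j}$. Dilations $\delta_\lambda(z,t)=(\lambda z,\lambda^2t)$. Horizontal plane at $\xi_0=(x_0,y_0,t_0)$: $H_{\xi_0}=\{(x,y,t):t=t_0+2(x\cdot y_0-x_0\cdot y)\}$. Gauge $N(z,t)=(|z|^4+t^2)^{1/4}$, $d_H(\xi,\zeta)=N(\zeta^{-1}\circ\xi)$, $B_H(\xi,r)=\{\zeta:d_H(\zeta,\xi)<r\}$, $\mathrm{diam}_H$ the $d_H$-diameter; $\Omega$ is horizontally bounded if $\sup\{\mathrm{diam}_H(\Omega\cap H_\xi):\xi\in\Omega\}<\infty$. A function $u$ on an $H$-convex set $\tilde\Omega$ is $H$-convex if $u(\xi_1\circ\delta_\lambda(\xi_1^{-1}\circ\xi_2))\le(1-\lambda)u(\xi_1)+\lambda u(\xi_2)$ for all $\xi_1,\xi_2\in\tilde\Omega$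 with $\xi_1\in H_{\xi_2}$, $\lambda\in[0,1]$. *)

(* Defs.v *)
(* H^n = C^n x R ~ R^n x R^n x R, coordinates (x,y,t). *)
From mathcomp Require Import all_boot all_order all_algebra.
From mathcomp Require Import all_classical all_reals all_analysis.
Set Implicit Arguments. Unset Strict Implicit. Unset Printing Implicit Defensive.
Import Order.TTheory GRing.Theory Num.Theory.
Import numFieldNormedType.Exports.
Local Open Scope ring_scope.
Local Open Scope classical_set_scope.

Section Heisenberg.
Variables (R : realType) (n : nat).

(* a point (x, y, t) of H^n, with z = x + i y *)
Local Notation hpt := ('rV[R]_n * 'rV[R]_n * R)%type.

Definition hx (p : hpt) : 'rV[R]_n := p.1.1.
Definition hy (p : hpt) : 'rV[R]_n := p.1.2.
Definition ht (p : hpt) : R := p.2.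

Definition dotR (a b : 'rV[R]_n) : R := \sum_(j < n) a 0 j * b 0 j.

(* Im <z, z'> with <z,z'> = sum_j z_j conj(z'_j) *)
Definition imherm (p q : hpt) : R := dotR (hy p) (hx q) - dotR (hx p) (hy q).

Definition hmul (p q : hpt) : hpt :=
  (hx p + hx q, hy p + hy q, ht p + ht q + 2 * imherm p q).

Definition hinv (p : hpt) : hpt := (- hx p, - hy p, - ht p).

Definition hdil (l : R) (p : hpt) : hpt := (l *: hx p, l *: hy p, l ^+ 2 * ht p).

Definition znorm2 (p : hpt) : R := dotR (hx p) (hx p) + dotR (hy p) (hy p).

Definition gauge (p : hpt) : R := Num.sqrt (Num.sqrt (znorm2 p ^+ 2 + ht p ^+ 2)).

Definition dH (xi zeta : hpt) : R := gauge (hmul (hinv zeta) xi).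

Definition BH (xi : hpt) (r : R) : set hpt := [set zeta | dH zeta xi < r].

Definition hplane (xi0 : hpt) : set hpt :=
  [set p | ht p = ht xi0 + 2 * (dotR (hx p) (hy xi0) - dotR (hx xi0) (hy p))].

Definition horiz_bounded (O : set hpt) : Prop :=
  exists M : R, forall xi, O xi ->
    forall a b, (O `&` hplane xi) a -> (O `&` hplane xi) b -> dH a b <= M.

Definition eucl_comb (l : R) (a b : hpt) : hpt :=
  ((1 - l) *: hx a + l *: hx b, (1 - l) *: hy a + l *: hy b,
   (1 - l) * ht a + l * ht b).

Definition eucl_convex (O : set hpt) : Prop :=
  forall a b l, O a -> O b -> 0 <= l -> l <= 1 -> O (eucl_comb l a b).

Definition H_convex_fun (D : set hpt) (u : hpt -> R) : Prop :=
  forall xi1 xi2 l, D xi1 -> D xi2 -> hplane xi2 xi1 -> 0 <= l -> l <= 1 ->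
    u (hmul xi1 (hdil l (hmul (hinv xi1) xi2))) <= (1 - l) * u xi1 + l * u xi2.

(* topological boundary (Euclidean topology on R^n x R^n x R) *)
Definition hboundary (O : set hpt) : set hpt := closure O `\` interior O.

End Heisenberg.
Notation hpt R n := (@matrix R 1 n * @matrix R 1 n * R)%type.

(* Main.v *)
Require Import Defs.
From mathcomp Require Import all_boot all_order all_algebra.
From mathcomp Require Import all_classical all_reals all_analysis.
From mathcomp Require Import ring lra.
Import Order.TTheory GRing.Theory Num.Theory.
Import numFieldNormedType.Exports.
Local Open Scope ring_scope.
Local Open Scope classical_set_scope.

Lemma dotC {R : realType} {n : nat} (a b : 'rV[R]_n) : dotR a b = dotR b a.
Proof. by apply: eq_bigr => j _; rewrite mulrC. Qed.
Lemma dotDl {R : realType} {n : nat} (a b c : 'rV[R]_n) : dotR (a + b) c = dotR a c + dotR b c.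
Proof. rewrite /dotR -big_split; apply: eq_bigr => j _; by rewrite !mxE mulrDl. Qed.
Lemma dotZl {R : realType} {n : nat} k (a c : 'rV[R]_n) : dotR (k *: a) c = k * dotR a c.
Proof. rewrite /dotR mulr_sumr; apply: eq_bigr => j _; by rewrite !mxE mulrA. Qed.
Lemma dotNl {R : realType} {n : nat} (a c : 'rV[R]_n) : dotR (- a) c = - dotR a c.
Proof. by rewrite -scaleN1r dotZl mulN1r. Qed.
Lemma dot0l {R : realType} {n : nat} (c : 'rV[R]_n) : dotR 0 c = 0.
Proof. by rewrite -(scale0r 0) dotZl mul0r. Qed.
Lemma dotDr {R : realType} {n : nat} (a b c : 'rV[R]_n) : dotR c (a + b) = dotR c a + dotR c b.
Proof. by rewrite !(dotC c) dotDl. Qed.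
Lemma dotZr {R : realType} {n : nat} k (a c : 'rV[R]_n) : dotR c (k *: a) = k * dotR c a.
Proof. by rewrite !(dotC c) dotZl. Qed.
Lemma dotNr {R : realType} {n : nat} (a c : 'rV[R]_n) : dotR c (- a) = - dotR c a.
Proof. by rewrite !(dotC c) dotNl. Qed.
Lemma dot0r {R : realType} {n : nat} (c : 'rV[R]_n) : dotR c 0 = 0.
Proof. by rewrite dotC dot0l. Qed.
Lemma dotBl {R : realType} {n : nat} (a b c : 'rV[R]_n) : dotR (a - b) c = dotR a c - dotR b c.
Proof. by rewrite dotDl dotNl. Qed.
Lemma dotBr {R : realType} {n : nat} (a b c : 'rV[R]_n) : dotR c (a - b) = dotR c a - dotR c b.
Proof. by rewrite dotDr dotNr. Qed.
Lemma dot_ge0 {R : realType} {n : nat} (a : 'rV[R]_n) : 0 <= dotR a a.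
Proof. by apply: sumr_ge0 => j _; rewrite -expr2 sqr_ge0. Qed.

Notation dotE := (dotDl, dotDr, dotZl, dotZr, dotNl, dotNr, dot0l, dot0r).

Definition hor {R : realType} {n : nat} (a b : 'rV[R]_n) : hpt R n := (a, b, 0).

Lemma hmulA {R : realType} {n : nat} (a b c : hpt R n) :
  hmul (hmul a b) c = hmul a (hmul b c).
Proof.
case: a => [[xa ya] ta]; case: b => [[xb yb] tb]; case: c => [[xc yc] tc].
rewrite /hmul /imherm /hx /hy /ht /= !addrA !dotE; congr (_, _, _); ring.
Qed.

Lemma hmulKV {R : realType} {n : nat} (a q : hpt R n) : hmul (hinv a) (hmul a q) = q.
Proof.
case: a => [[xa ya] ta]; case: q => [[xb yb] tb].
rewrite /hmul /hinv /imherm /hx /hy /ht /= !dotE (dotC xa ya); congr (_, _, _).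
- by rewrite addKr. - by rewrite addKr. - ring.
Qed.

Lemma hmulVK {R : realType} {n : nat} (a q : hpt R n) : hmul a (hmul (hinv a) q) = q.
Proof.
case: a => [[xa ya] ta]; case: q => [[xb yb] tb].
rewrite /hmul /hinv /imherm /hx /hy /ht /= !dotE (dotC xa ya); congr (_, _, _).
- by rewrite addNKr. - by rewrite addNKr. - ring.
Qed.

Lemma hmul_hor {R : realType} {n : nat} (p : hpt R n) a b :
  hmul p (hor a b) = (hx p + a, hy p + b, ht p + 2 * (dotR (hy p) a - dotR (hx p) b)).
Proof. by rewrite /hmul /imherm /hor /=; rewrite addr0. Qed.

Lemma Lform {R : realType} {n : nat} (p : hpt R n) (e : 'rV[R]_n) l :
  hmul p (hor (l *: e) 0) = (hx p + l *: e, hy p, ht p + l * (2 * dotR (hy p) e)).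
Proof. rewrite hmul_hor addr0 !dotE; congr (_,_,_); ring. Qed.

Lemma Lcont {R : realType} {n : nat} (p : hpt R n) (e : 'rV[R]_n) (b : R) :
  hmul p (hor (l *: e) 0) @[l --> b] --> hmul p (hor (b *: e) 0).
Proof.
rewrite (_ : (fun l => hmul p (hor (l *: e) 0)) = (fun l => (hx p + l *: e, hy p, ht p + l * (2 * dotR (hy p) e)))); last first.
  by apply: funext => l; rewrite Lform.
rewrite Lform.
apply: (@cvg_pair _ _ _ _ (nbhs (hx p + b *: e, hy p)) (nbhs (ht p + b * (2 * dotR (hy p) e)))).
  apply: (@cvg_pair _ _ _ _ (nbhs (hx p + b *: e)) (nbhs (hy p))).
- apply: cvgD; first exact: cvg_cst. apply: cvgZ; [exact: cvg_id | exact: cvg_cst].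
- exact: cvg_cst.
- apply: cvgD; first exact: cvg_cst. apply: cvgM; [exact: cvg_id | exact: cvg_cst].
Qed.

Lemma hmul0 {R : realType} {n : nat} (p : hpt R n) : hmul p (hor 0 0) = p.
Proof. case: p => [[x y] t]; rewrite hmul_hor /= !addr0 !dotE; congr (_,_,_); ring. Qed.

Lemma gauge_hor {R : realType} {n : nat} (e : 'rV[R]_n) l : dotR e e = 1 ->
  gauge (hor (l *: e) 0) = `|l|.
Proof.
move=> he; rewrite /gauge /znorm2 /hor /hx /hy /ht /= !dotE he mulr1 addr0.
rewrite -expr2 (_ : 0 ^+ 2 = 0 :> R) ?expr0n // addr0 sqrtr_sqr ger0_norm ?sqr_ge0 //.
by rewrite sqrtr_sqr.
Qed.

Lemma exit_pt {R : realType} {n : nat} (Omega : set (hpt R n)) (p : hpt R n) (e : 'rV[R]_n) :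
  open Omega -> horiz_bounded Omega -> dotR e e = 1 -> Omega p ->
  exists b, 0 < b /\ hboundary Omega (hmul p (hor (b *: e) 0)).
Proof.
move=> hO [M hM] he Op.
pose L := fun l : R => hmul p (hor (l *: e) 0).
have Lc : forall b, L l @[l --> b] --> L b by move=> b; exact: Lcont.
pose S := [set l : R | 0 <= l /\ Omega (L l)].
have S0 : S 0 by split => //; rewrite /L scale0r hmul0.
have Sub : forall l, S l -> l <= M.
  move=> l [l0 Ol].
  have hpl : hplane p (L l).
    rewrite /hplane /L Lform /hx /hy /ht /= dotDl dotZl (dotC e (p.1.2)); ring.
  have hpp : hplane p p by rewrite /hplane /=; ring.
  have := hM p Op (L l) p (conj Ol hpl) (conj Op hpp).
  by rewrite /dH /L hmulKV gauge_hor // ger0_norm.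
have hsS : has_sup S by split; [exists 0 | exists M => l /Sub].
pose b := sup S.
have Sb : forall l, S l -> l <= b by move=> l Sl; exact: sup_upper_bound.
have opn : forall c, Omega (L c) -> exists2 eps, 0 < eps & forall l, `|c - l| < eps -> Omega (L l).
  move=> c Oc.
  have : nbhs (L c) Omega by apply: open_nbhs_nbhs; split.
  move/(Lc c) => /nbhs_ballP; case=> eps eps0 hb; exists eps => // l hl.
have b0 : 0 < b.
  have [eps eps0 heps] := opn 0 (S0.2).
  have : S (eps / 2) by split; [lra | apply: heps; rewrite sub0r normrN ger0_norm; lra].
  move/Sb; lra.
exists b; split => //; split.
- move=> B /(Lc b) /nbhs_ballP [eps eps0 hb].
  have [l Sl hl] := sup_adherent eps0 hsS.
  have := Sb l Sl => hlb.
  exists (L l); split; first exact: Sl.2.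
  apply: (hb l); rewrite -ball_normE /ball_ /= ger0_norm; rewrite /b in hl hlb |- *; lra.
- move=> /interior_subset Ob.
  have [eps eps0 heps] := opn b Ob.
  have : S (b + eps / 2).
    split; first lra. apply: heps. rewrite opprD addrA subrr sub0r normrN ger0_norm; lra.
  move/Sb; lra.
Qed.

Lemma line_comb {R : realType} {n : nat} (p : hpt R n) (e : 'rV[R]_n) c1 c2 l :
  let L := fun c => hmul p (hor (c *: e) 0) in
  hmul (L c1) (hdil l (hmul (hinv (L c1)) (L c2))) = L (c1 + l * (c2 - c1))
  /\ hplane (L c2) (L c1).
Proof.
move=> L; rewrite /L !Lform; split.
- rewrite /hmul /hdil /hinv /imherm /hx /hy /ht /=.
  rewrite !dotE ?(dotC e (p.1.2)) ?(dotC e (p.1.1)) ?(dotC (p.1.1) (p.1.2)).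
  congr (_,_,_).
  + by apply/rowP => j; rewrite !mxE; ring.
  + by apply/rowP => j; rewrite !mxE; ring.
  + ring.
- rewrite /hplane /hx /hy /ht /= !dotE ?(dotC e (p.1.2)) ?(dotC e (p.1.1)) ?(dotC (p.1.1) (p.1.2)); ring.
Qed.

Lemma hconv_step {R : realType} {n : nat} (Omega : set (hpt R n)) (u : hpt R n -> R) :
  H_convex_fun (closure Omega) u -> (forall p, Omega p -> u p <= 0) ->
  forall (p : hpt R n) a b (be : R), 1 <= be -> Omega p ->
  Omega (hmul p (hor (be *: a) (be *: b))) ->
  (1 - be^-1) * (- u p) <= - u (hmul p (hor a b)).
Proof.
move=> Hc Hneg p a b be be1 Op Oq.
have be0 : 0 < be by lra.
have hpl : hplane (hmul p (hor (be *: a) (be *: b))) p.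
  rewrite /hplane hmul_hor /hx /hy /ht /= !dotE ?(dotC (p.1.1) (p.1.2)) ?(dotC a (p.1.2)) ?(dotC b (p.1.1)); ring.
have l0 : 0 <= be^-1 by rewrite invr_ge0 ltW.
have l1 : be^-1 <= 1 by rewrite invf_le1.
have := Hc p _ be^-1 (subset_closure Op) (subset_closure Oq) hpl l0 l1.
rewrite hmulKV (_ : hdil be^-1 (hor (be *: a) (be *: b)) = hor a b); last first.
  rewrite /hdil /hor /hx /hy /ht /= !scalerA mulVf ?gt_eqF // !scale1r mulr0 //.
have := Hneg _ Oq; set U := u (hmul p _); set V := u (hmul p _).
move=> hq hc.
nra.
Qed.

Definition e1 {R : realType} {n : nat} (hn : (0 < n)%N) : 'rV[R]_n :=
  \row_j (j == Ordinal hn)%:R.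

Lemma e1_dot {R : realType} {n : nat} (hn : (0 < n)%N) : dotR (e1 (R:=R) hn) (e1 hn) = 1.
Proof.
rewrite /dotR (bigD1 (Ordinal hn)) //= !mxE eqxx mulr1 big1 ?addr0 // => j /negbTE hj.
by rewrite !mxE hj mul0r.
Qed.

Lemma u_nonpos {R : realType} {n : nat} (hn : (0 < n)%N) (Omega : set (hpt R n)) (u : hpt R n -> R) :
  open Omega -> horiz_bounded Omega -> H_convex_fun (closure Omega) u ->
  (forall p, hboundary Omega p -> u p = 0) -> forall p, Omega p -> u p <= 0.
Proof.
move=> hO hB Hc Hb p Op.
have he := e1_dot (R:=R) hn.
have he' : dotR (- e1 (R:=R) hn) (- e1 hn) = 1 by rewrite !dotE opprK.
have [b [b0 Bb]] := exit_pt _ _ _ hO hB he Op.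
have [a [a0 Ba]] := exit_pt _ _ _ hO hB he' Op.
rewrite scalerN -scaleNr in Ba.
have [E H] := line_comb p (e1 hn) (- a) b (a / (a + b)).
have l0 : 0 <= a / (a + b) by rewrite divr_ge0 // ltW // addr_gt0.
have l1 : a / (a + b) <= 1 by rewrite ler_pdivrMr ?addr_gt0 //; lra.
have := Hc _ _ _ (Ba.1) (Bb.1) H l0 l1.
rewrite E (Hb _ Ba) (Hb _ Bb) !mulr0 addr0.
rewrite (_ : - a + a / (a + b) * (b - - a) = 0); last first.
  by rewrite opprK [b + a]addrC mulfVK ?gt_eqF ?addr_gt0 // addNr.
by rewrite scale0r hmul0.
Qed.

Lemma gauge_lt {R : realType} {n : nat} (q : hpt R n) (c : R) : 0 < c ->
  (gauge q < c) = (znorm2 q ^+ 2 + ht q ^+ 2 < (c ^+ 2) ^+ 2).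
Proof.
move=> c0.
have E : c = Num.sqrt (Num.sqrt ((c ^+ 2) ^+ 2)).
  by rewrite sqrtr_sqr ger0_norm ?sqr_ge0 // sqrtr_sqr ger0_norm // ltW.
rewrite [X in (_ < X) = _]E.
by rewrite /gauge ltr_sqrt ?sqrtr_gt0 ?exprn_gt0 // ltr_sqrt ?exprn_gt0.
Qed.

Lemma znorm2_ge0 {R : realType} {n : nat} (q : hpt R n) : 0 <= znorm2 q.
Proof. by rewrite /znorm2 addr_ge0 // dot_ge0. Qed.

Lemma harnack1 {R : realType} {n : nat} (hn : (0 < n)%N)
  (Omega : set (hpt R n)) (u : hpt R n -> R) (xi0 : hpt R n) (r : R) :
  H_convex_fun (closure Omega) u -> (forall p, Omega p -> u p <= 0) ->
  0 < r -> BH xi0 (3 * r) `<=` Omega ->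
  forall xi zeta, BH xi0 r xi -> BH xi0 r zeta -> (- u xi) / 18 <= - u zeta.
Proof.
move=> Hc Hneg r0 Hball xi zeta Bxi Bzeta.
have inO : forall q, znorm2 q ^+ 2 + ht q ^+ 2 < 81 * (r ^+ 2) ^+ 2 -> Omega (hmul xi0 q).
  move=> q hq; apply: Hball; rewrite /BH /= /dH hmulKV gauge_lt ?mulr_gt0 //.
  by rewrite (_ : ((3 * r) ^+ 2) ^+ 2 = 81 * (r ^+ 2) ^+ 2) //; ring.
have tstep : forall q a b (be : R), 1 <= be -> Omega (hmul xi0 q) ->
    Omega (hmul xi0 (hmul q (hor (be *: a) (be *: b)))) ->
    (1 - be^-1) * (- u (hmul xi0 q)) <= - u (hmul xi0 (hmul q (hor a b))).
  move=> q a b be be1 Oq Oe; rewrite -hmulA; apply: (hconv_step Omega) => //; by rewrite hmulA.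
move: Bxi Bzeta; rewrite /BH /= /dH !gauge_lt //.
rewrite -(hmulVK xi0 xi) -(hmulVK xi0 zeta) !hmulKV.
case: (hmul (hinv xi0) xi) => [[x1 y1] t1]; case: (hmul (hinv xi0) zeta) => [[x2 y2] t2].
rewrite /znorm2 /hx /hy /ht /= => h1 h2.
set N1 := dotR x1 x1 + dotR y1 y1 in h1.
set N2 := dotR x2 x2 + dotR y2 y2 in h2.
have N1p : 0 <= N1 by rewrite addr_ge0 // dot_ge0.
have N2p : 0 <= N2 by rewrite addr_ge0 // dot_ge0.
set e := e1 (R:=R) hn.
have he : dotR e e = 1 by exact: e1_dot.
have r2 : 0 < r ^+ 2 by rewrite exprn_gt0.
have t1b : t1 ^+ 2 < (r ^+ 2) ^+ 2 by nra.
have t2b : t2 ^+ 2 < (r ^+ 2) ^+ 2 by nra.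
pose tau := (t1 - t2) / (2 * r).
have htau : tau * (2 * r) = t1 - t2 by rewrite /tau mulfVK // mulf_neq0 // gt_eqF.
have tau2 : tau ^+ 2 < r ^+ 2.
  have : (t1 - t2) ^+ 2 < 4 * (r ^+ 2) ^+ 2 by nra.
  rewrite -htau; nra.
have inO' : forall q Z T, znorm2 q = Z -> ht q = T -> Z ^+ 2 + T ^+ 2 < 81 * (r ^+ 2) ^+ 2 ->
    Omega (hmul xi0 q).
  by move=> q Z T hZ hT h; apply: inO; rewrite hZ hT.
have S0 : (1 - 3^-1) * (- u (hmul xi0 (x1, y1, t1))) <= - u (hmul xi0 (0, 0, t1)).
  have -> : (0, 0, t1) = hmul (x1, y1, t1) (hor (- x1) (- y1)).
    rewrite hmul_hor /hx /hy /ht /= !dotE (dotC y1 x1) !subrr; congr (_,_,_); ring.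
  apply: tstep; first lra.
  - apply: (inO' _ N1 t1) => //; nra.
  - apply: (inO' _ (4 * N1) t1).
    + rewrite hmul_hor /znorm2 /hx /hy /ht /= !dotE /N1; ring.
    + rewrite hmul_hor /hx /hy /ht /= !dotE (dotC y1 x1); ring.
    + nra.
have S1 : (1 - 2^-1) * (- u (hmul xi0 (0, 0, t1))) <= - u (hmul xi0 (r *: e, 0, t1)).
  have -> : (r *: e, 0, t1) = hmul (0, 0, t1) (hor (r *: e) 0).
    rewrite hmul_hor /hx /hy /ht /= !dotE; congr (_,_,_); [by rewrite add0r | by rewrite addr0 | ring].
  apply: tstep; first lra.
  - apply: (inO' _ 0 t1); [by rewrite /znorm2 /= !dotE addr0 | by [] | nra].
  - apply: (inO' _ (4 * r ^+ 2) t1).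
    + rewrite hmul_hor /znorm2 /hx /hy /ht /= !dotE he; ring.
    + rewrite hmul_hor /hx /hy /ht /= !dotE; ring.
    + nra.
have S2 : (1 - 2^-1) * (- u (hmul xi0 (r *: e, 0, t1))) <= - u (hmul xi0 (r *: e, tau *: e, t2)).
  have -> : (r *: e, tau *: e, t2) = hmul (r *: e, 0, t1) (hor 0 (tau *: e)).
    rewrite hmul_hor /hx /hy /ht /= !dotE he; congr (_,_,_); [by rewrite addr0 | by rewrite add0r | ].
    rewrite (_ : 2 * (0 - r * (tau * 1)) = - (tau * (2 * r))); last ring.
    rewrite htau; ring.
  apply: tstep; first lra.
  - apply: (inO' _ (r ^+ 2) t1); [by rewrite /znorm2 /= !dotE he; ring | by [] | nra].
  - apply: (inO' _ (r ^+ 2 + 4 * tau ^+ 2) (t1 - 2 * (tau * (2 * r)))).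
    + rewrite hmul_hor /znorm2 /hx /hy /ht /= !dotE he; ring.
    + rewrite hmul_hor /hx /hy /ht /= !dotE he; ring.
    + rewrite htau.
      have : (r ^+ 2 + 4 * tau ^+ 2) ^+ 2 < 25 * (r ^+ 2) ^+ 2 by nra.
      have : (t1 - 2 * (t1 - t2)) ^+ 2 < 10 * (r ^+ 2) ^+ 2 by nra.
      nra.
have S3 : (1 - 2^-1) * (- u (hmul xi0 (r *: e, tau *: e, t2))) <= - u (hmul xi0 (0, 0, t2)).
  have -> : (0, 0, t2) = hmul (r *: e, tau *: e, t2) (hor (- (r *: e)) (- (tau *: e))).
    rewrite hmul_hor /hx /hy /ht /= !dotE he !subrr; congr (_,_,_); ring.
  apply: tstep; first lra.
  - apply: (inO' _ (r ^+ 2 + tau ^+ 2) t2); [by rewrite /znorm2 /= !dotE he; ring | by [] | nra].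
  - apply: (inO' _ (r ^+ 2 + tau ^+ 2) t2).
    + rewrite hmul_hor /znorm2 /hx /hy /ht /= !dotE he; ring.
    + rewrite hmul_hor /hx /hy /ht /= !dotE he; ring.
    + nra.
have S4 : (1 - 3^-1) * (- u (hmul xi0 (0, 0, t2))) <= - u (hmul xi0 (x2, y2, t2)).
  have -> : (x2, y2, t2) = hmul (0, 0, t2) (hor x2 y2).
    rewrite hmul_hor /hx /hy /ht /= !dotE !add0r; congr (_,_,_); ring.
  apply: tstep; first lra.
  - apply: (inO' _ 0 t2); [by rewrite /znorm2 /= !dotE addr0 | by [] | nra].
  - apply: (inO' _ (9 * N2) t2).
    + rewrite hmul_hor /znorm2 /hx /hy /ht /= !dotE /N2; ring.
    + rewrite hmul_hor /hx /hy /ht /= !dotE; ring.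
    + nra.
have U0 : 0 <= - u (hmul xi0 (x1, y1, t1)).
  rewrite oppr_ge0; apply: Hneg; apply: (inO' _ N1 t1) => //; nra.
have c3 : (1 - 3^-1 : R) = 2 / 3 by field.
have c2 : (1 - 2^-1 : R) = 1 / 2 by field.
rewrite c3 in S0 S4; rewrite c2 in S1 S2 S3.
nra.
Qed.

Theorem theorem6p7 (R : realType) (n : nat) (hn : (0 < n)%N)
  (Omega : set (hpt R n)) (u : hpt R n -> R) (xi0 : hpt R n) (r : R) :
  open Omega -> horiz_bounded Omega -> eucl_convex Omega ->
  H_convex_fun (closure Omega) u ->
  (forall p, hboundary Omega p -> u p = 0) ->
  Omega xi0 -> 0 < r -> BH xi0 (3 * r) `<=` Omega ->
  forall xi zeta, BH xi0 r xi -> BH xi0 r zeta ->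
    u xi / 31 >= u zeta /\ u zeta >= 31 * u xi.
Proof.
move=> hO hB _ Hc Hb _ r0 Hball xi zeta Bxi Bzeta.
have Hneg := u_nonpos hn _ _ hO hB Hc Hb.
have sub : BH xi0 r `<=` Omega.
  move=> p; rewrite /BH /= => hp; apply: Hball; rewrite /BH /=; lra.
have h1 := harnack1 hn _ _ _ _ Hc Hneg r0 Hball _ _ Bxi Bzeta.
have h2 := harnack1 hn _ _ _ _ Hc Hneg r0 Hball _ _ Bzeta Bxi.
have ux := Hneg _ (sub _ Bxi).
have uz := Hneg _ (sub _ Bzeta).
split; lra.
Qed.
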